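(* The Sorgenfrey line $\mathbb S$ is strongly discrete homogeneous.
   Context: The Sorgenfrey line is $\mathbb R$ with the topology generated by half-open intervals $[a,b)$. A subset $D$ of $X$ is discrete if each point of $X$ has a neighbourhood containing at most one point of $D$. A Hausdorff space $X$ is strongly discrete homogeneous (sDH) if for any two discrete subsets $A,B$ of $X$ and any bijection $f\colon A\to B$, $f$ extends to a homeomorphism of $X$ onto itself. *)

(* Defs.v *)
From Stdlib Require Import Reals.
Open Scope R_scope.

(** The Sorgenfrey topology on R: generated by half-open intervals [a,b).
    A set U is open iff every x in U has some b > x with [x,b) contained in U. *)
Definition sorg_open (U : R -> Prop) : Prop :=
  forall x, U x -> exists b, x < b /\ (forall y, x <= y < b -> U y).

Definition sorg_continuous (f : R -> R) : Prop :=
  forall U, sorg_open U -> sorg_open (fun x => U (f x)).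

Definition sorg_homeomorphism (h : R -> R) : Prop :=
  exists g : R -> R,
    (forall x, g (h x) = x) /\ (forall y, h (g y) = y) /\
    sorg_continuous h /\ sorg_continuous g.

Definition sorg_hausdorff : Prop :=
  forall x y, x <> y -> exists U V, sorg_open U /\ sorg_open V /\ U x /\ V y /\
    (forall z, U z -> V z -> False).

Definition sorg_discrete (D : R -> Prop) : Prop :=
  forall x, exists U, sorg_open U /\ U x /\
    (forall d1 d2, D d1 -> D d2 -> U d1 -> U d2 -> d1 = d2).

Definition bij_between (A B : R -> Prop) (f : R -> R) : Prop :=
  (forall a, A a -> B (f a)) /\
  (forall a1 a2, A a1 -> A a2 -> f a1 = f a2 -> a1 = a2) /\
  (forall b, B b -> exists a, A a /\ f a = b).

Definition sorgenfrey_sDH : Prop :=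
  sorg_hausdorff /\
  forall (A B : R -> Prop) (f : R -> R),
    sorg_discrete A -> sorg_discrete B -> bij_between A B f ->
    exists h : R -> R, sorg_homeomorphism h /\ (forall a, A a -> h a = f a).

(* Main.v *)
Require Import Defs.
From Stdlib Require Import Reals.
From Stdlib Require Import Lra Classical ClassicalEpsilon.
Open Scope R_scope.

Lemma loc_trans_cont (h : R -> R) :
  (forall x, exists d c, 0 < d /\ forall y, x <= y < x + d -> h y = y + c) ->
  sorg_continuous h.
Proof.
  intros H U HU x Ux.
  destruct (H x) as [d [c [Hd Hy]]].
  destruct (HU (h x) Ux) as [b [Hb Hb2]].
  assert (hx : h x = x + c) by (apply Hy; lra).
  exists (x + Rmin d (b - h x)). split.
  - assert (0 < Rmin d (b - h x)) by (apply Rmin_pos; lra). lra.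
  - intros y Hy'. pose proof (Rmin_l d (b - h x)). pose proof (Rmin_r d (b - h x)).
    apply Hb2. rewrite (Hy y) by lra. lra.
Qed.

Definition swapf (Q : R -> Prop) (s t l : R -> R) (y : R) : R :=
  match excluded_middle_informative (exists q, Q q /\ s q <= y < s q + l q) with
  | left H => let q := proj1_sig (constructive_indefinite_description _ H) in y - s q + t q
  | right _ =>
    match excluded_middle_informative (exists q, Q q /\ t q <= y < t q + l q) with
    | left H => let q := proj1_sig (constructive_indefinite_description _ H) in y - t q + s q
    | right _ => y
    end
  end.

Section Swap.
Variables (Q : R -> Prop) (s t l : R -> R).
Hypothesis DXX : forall q q' y, Q q -> Q q' -> s q <= y < s q + l q -> s q' <= y < s q' + l q' -> q = q'.
Hypothesis DYY : forall q q' y, Q q -> Q q' -> t q <= y < t q + l q -> t q' <= y < t q' + l q' -> q = q'.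
Hypothesis DXY : forall q q' y, Q q -> Q q' -> s q <= y < s q + l q -> t q' <= y < t q' + l q' -> False.
Hypothesis LF : forall x, exists e, 0 < e /\ forall q, Q q ->
  (s q <= x < s q + l q \/ s q + l q <= x \/ x + e <= s q) /\
  (t q <= x < t q + l q \/ t q + l q <= x \/ x + e <= t q).

Lemma swap_X q y : Q q -> s q <= y < s q + l q -> swapf Q s t l y = y - s q + t q.
Proof.
  intros Hq Hy. unfold swapf.
  destruct (excluded_middle_informative _) as [H|H].
  - destruct (constructive_indefinite_description _ H) as [q' [Hq' Hy']]; simpl.
    rewrite (DXX q' q y); auto.
  - exfalso; apply H; eauto.
Qed.

Lemma swap_Y q y : Q q -> t q <= y < t q + l q -> swapf Q s t l y = y - t q + s q.
Proof.
  intros Hq Hy. unfold swapf.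
  destruct (excluded_middle_informative _) as [H|H].
  - exfalso. destruct H as [q' [Hq' Hy']]. apply (DXY q' q y); auto.
  - destruct (excluded_middle_informative _) as [H'|H'].
    + destruct (constructive_indefinite_description _ H') as [q' [Hq' Hy']]; simpl.
      rewrite (DYY q' q y); auto.
    + exfalso; apply H'; eauto.
Qed.

Lemma swap_O y : (forall q, Q q -> ~ (s q <= y < s q + l q) /\ ~ (t q <= y < t q + l q)) ->
  swapf Q s t l y = y.
Proof.
  intros Hn. unfold swapf.
  destruct (excluded_middle_informative _) as [H|H].
  - exfalso. destruct H as [q [Hq Hy]]. apply (proj1 (Hn q Hq)); auto.
  - destruct (excluded_middle_informative _) as [H'|H']; auto.
    exfalso. destruct H' as [q [Hq Hy]]. apply (proj2 (Hn q Hq)); auto.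
Qed.

Lemma swap_inv y : swapf Q s t l (swapf Q s t l y) = y.
Proof.
  destruct (classic (exists q, Q q /\ s q <= y < s q + l q)) as [[q [Hq Hy]]|H1].
  - rewrite (swap_X q y) by auto. rewrite (swap_Y q) by (auto; lra). lra.
  - destruct (classic (exists q, Q q /\ t q <= y < t q + l q)) as [[q [Hq Hy]]|H2].
    + rewrite (swap_Y q y) by auto. rewrite (swap_X q) by (auto; lra). lra.
    + assert (Hn : forall q, Q q -> ~ (s q <= y < s q + l q) /\ ~ (t q <= y < t q + l q))
        by (intros q Hq; split; intro; eauto).
      rewrite !swap_O; auto; rewrite swap_O; auto.
Qed.

Lemma swap_cont : sorg_continuous (swapf Q s t l).
Proof.
  apply loc_trans_cont. intros x.
  destruct (classic (exists q, Q q /\ s q <= x < s q + l q)) as [[q [Hq Hy]]|H1].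
  - exists (s q + l q - x), (t q - s q). split; [lra|].
    intros y Hy'. rewrite (swap_X q y) by (auto; lra). lra.
  - destruct (classic (exists q, Q q /\ t q <= x < t q + l q)) as [[q [Hq Hy]]|H2].
    + exists (t q + l q - x), (s q - t q). split; [lra|].
      intros y Hy'. rewrite (swap_Y q y) by (auto; lra). lra.
    + destruct (LF x) as [e [He HL]]. exists e, 0. split; auto.
      intros y Hy. rewrite swap_O; [lra|].
      intros q Hq. destruct (HL q Hq) as [[A1|[A1|A1]] [B1|[B1|B1]]];
        try (exfalso; eauto; fail); split; lra.
Qed.
End Swap.

Section Anchor.
Variables (D : R -> Prop) (dl : R -> R).
Hypothesis dpos : forall x, 0 < dl x.
Hypothesis iso : forall x y, x < y < x + dl x -> ~ D y.

Lemma anch p p' y : D p -> D p' -> p <= y < p + dl p -> p' <= y < p' + dl p' -> p = p'.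
Proof.
  intros Dp Dp' H1 H2. destruct (Rtotal_order p p') as [H|[H|H]]; auto.
  - exfalso; apply (iso p p'); auto; lra.
  - exfalso; apply (iso p' p); auto; lra.
Qed.

Definition slotted p u l := (u = p /\ u + l <= p + dl p / 2) \/ (u = p + dl p / 2 /\ u + l <= p + dl p).

Lemma anchor_lf (Fam : R -> R -> Prop) :
  (forall u l, Fam u l -> exists p, D p /\ slotted p u l) ->
  forall x, exists e, 0 < e /\ forall u l, Fam u l -> (u <= x < u + l \/ u + l <= x \/ x + e <= u).
Proof.
  intros HF x. unfold slotted in HF.
  destruct (classic (exists p, D p /\ p <= x < p + dl p)) as [[p [Dp Hp]]|Hn].
  - pose proof (dpos p).
    destruct (Rlt_le_dec x (p + dl p / 2)) as [Hx|Hx].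
    + exists (p + dl p / 2 - x). split; [lra|].
      intros u l Hul. destruct (HF u l Hul) as [p' [Dp' Hs]].
      pose proof (dpos p').
      destruct (Rtotal_order p' p) as [Hc|[Hc|Hc]].
      * assert (p' + dl p' <= p) by (destruct (Rlt_le_dec p (p' + dl p')); auto;
          exfalso; apply (iso p' p); auto; lra). right; left; lra.
      * subst p'. lra.
      * assert (p + dl p <= p') by (destruct (Rlt_le_dec p' (p + dl p)); auto;
          exfalso; apply (iso p p'); auto; lra). right; right; lra.
    + exists (p + dl p - x). split; [lra|].
      intros u l Hul. destruct (HF u l Hul) as [p' [Dp' Hs]].
      pose proof (dpos p').
      destruct (Rtotal_order p' p) as [Hc|[Hc|Hc]].
      * assert (p' + dl p' <= p) by (destruct (Rlt_le_dec p (p' + dl p')); auto;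
          exfalso; apply (iso p' p); auto; lra). right; left; lra.
      * subst p'. destruct (Rlt_le_dec x (u + l)); lra.
      * assert (p + dl p <= p') by (destruct (Rlt_le_dec p' (p + dl p)); auto;
          exfalso; apply (iso p p'); auto; lra). right; right; lra.
  - exists (dl x). split; auto.
    intros u l Hul. destruct (HF u l Hul) as [p' [Dp' Hs]].
    pose proof (dpos p').
    destruct (Rle_lt_dec p' x) as [Hc|Hc].
    + assert (p' + dl p' <= x) by (destruct (Rlt_le_dec x (p' + dl p')); auto;
        exfalso; apply Hn; exists p'; auto). right; left; lra.
    + assert (x + dl x <= p') by (destruct (Rlt_le_dec p' (x + dl x)); auto;
        exfalso; apply (iso x p'); auto; lra). right; right; lra.
Qed.
End Anchor.

Lemma disc_right (A : R -> Prop) : sorg_discrete A ->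
  forall x, exists e, 0 < e /\ forall y, x < y < x + e -> ~ A y.
Proof.
  intros HA x. destruct (HA x) as [U [HU [Ux H1]]].
  destruct (HU x Ux) as [b [Hb Hb2]].
  destruct (classic (exists a, A a /\ x < a < b)) as [[a [Aa Ha]]|Hn].
  - exists (a - x). split; [lra|]. intros y Hy Ay.
    assert (y = a) by (apply H1; auto; apply Hb2; lra). lra.
  - exists (b - x). split; [lra|]. intros y Hy Ay. apply Hn. exists y. split; auto; lra.
Qed.

Theorem mainTheorem7 : sorgenfrey_sDH.
Proof.
  split.
  - intros x y Hxy. destruct (Rtotal_order x y) as [H|[H|H]]; [|contradiction|].
    + exists (fun z => x <= z < y), (fun z => y <= z < y + 1).
      repeat split; try lra.
      * intros z Hz. exists y. split; [lra|]. intros; lra.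
      * intros z Hz. exists (y+1). split; [lra|]. intros; lra.
      * intros z H1 H2. lra.
    + exists (fun z => x <= z < x + 1), (fun z => y <= z < x).
      repeat split; try lra.
      * intros z Hz. exists (x+1). split; [lra|]. intros; lra.
      * intros z Hz. exists x. split; [lra|]. intros; lra.
      * intros z H1 H2. lra.
  - intros A B f HA HB [Hf1 [Hf2 Hf3]].
    set (D := fun c => A c \/ B c).
    assert (Hd : forall x, {e | 0 < e /\ forall y, x < y < x + e -> ~ D y}).
    { intro x. apply constructive_indefinite_description.
      destruct (disc_right A HA x) as [e1 [He1 H1]].
      destruct (disc_right B HB x) as [e2 [He2 H2]].
      exists (Rmin e1 e2). split; [apply Rmin_pos; auto|].
      pose proof (Rmin_l e1 e2). pose proof (Rmin_r e1 e2).
      intros y Hy [Ay|By]; [apply (H1 y)|apply (H2 y)]; auto; lra. }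
    set (dl := fun x => proj1_sig (Hd x)).
    assert (dpos : forall x, 0 < dl x) by (intro x; exact (proj1 (proj2_sig (Hd x)))).
    assert (iso : forall x y, x < y < x + dl x -> ~ D y)
      by (intros x y; exact (proj2 (proj2_sig (Hd x)) y)).
    set (len := fun a => Rmin (dl a) (dl (f a)) / 4).
    assert (Hlen : forall a, 0 < len a /\ len a <= dl a / 4 /\ len a <= dl (f a) / 4).
    { intro a. unfold len. pose proof (Rmin_l (dl a) (dl (f a))).
      pose proof (Rmin_r (dl a) (dl (f a))).
      pose proof (Rmin_pos _ _ (dpos a) (dpos (f a))). lra. }
    assert (DA : forall a, A a -> D a) by (intros; left; auto).
    assert (DB : forall a, A a -> D (f a)) by (intros; right; auto).
    set (s1 := fun a : R => a). set (t1 := fun a => a + dl a / 2).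
    assert (S1 : sorg_continuous (swapf A s1 t1 len) /\ (forall y, swapf A s1 t1 len (swapf A s1 t1 len y) = y)
       /\ forall a, A a -> swapf A s1 t1 len a = a + dl a / 2).
    { assert (DXX : forall q q' y, A q -> A q' -> s1 q <= y < s1 q + len q -> s1 q' <= y < s1 q' + len q' -> q = q').
      { unfold s1; intros q q' y Aq Aq' H1 H2. pose proof (Hlen q). pose proof (Hlen q').
        apply (anch D dl iso q q' y); auto; lra. }
      assert (DYY : forall q q' y, A q -> A q' -> t1 q <= y < t1 q + len q -> t1 q' <= y < t1 q' + len q' -> q = q').
      { unfold t1; intros q q' y Aq Aq' H1 H2. pose proof (Hlen q). pose proof (Hlen q').
        pose proof (dpos q). pose proof (dpos q').
        apply (anch D dl iso q q' y); auto; lra. }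
      assert (DXY : forall q q' y, A q -> A q' -> s1 q <= y < s1 q + len q -> t1 q' <= y < t1 q' + len q' -> False).
      { unfold s1, t1; intros q q' y Aq Aq' H1 H2. pose proof (Hlen q). pose proof (Hlen q').
        pose proof (dpos q). pose proof (dpos q').
        assert (q = q') by (apply (anch D dl iso q q' y); auto; lra). subst q'. lra. }
      assert (LF : forall x, exists e, 0 < e /\ forall q, A q ->
        (s1 q <= x < s1 q + len q \/ s1 q + len q <= x \/ x + e <= s1 q) /\
        (t1 q <= x < t1 q + len q \/ t1 q + len q <= x \/ x + e <= t1 q)).
      { intro x.
        destruct (anchor_lf D dl dpos iso (fun u l => exists q, A q /\ ((u = s1 q /\ l = len q) \/ (u = t1 q /\ l = len q)))) with (x := x)
          as [e [He HL]].
        - intros u l [q [Aq [[-> ->]|[-> ->]]]]; exists q; split; auto; unfold slotted, s1, t1;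
            pose proof (Hlen q); pose proof (dpos q); [left|right]; split; auto; lra.
        - exists e; split; auto. intros q Aq. split; apply HL; exists q; auto. }
      split; [apply swap_cont; auto|]. split; [apply swap_inv; auto|].
      intros a Aa. rewrite (swap_X A s1 t1 len DXX a a); auto.
      + unfold s1, t1; lra.
      + unfold s1; pose proof (Hlen a); lra. }
    assert (S2 : sorg_continuous (swapf A t1 f len) /\ (forall y, swapf A t1 f len (swapf A t1 f len y) = y)
       /\ forall a, A a -> swapf A t1 f len (a + dl a / 2) = f a).
    { assert (DXX : forall q q' y, A q -> A q' -> t1 q <= y < t1 q + len q -> t1 q' <= y < t1 q' + len q' -> q = q').
      { unfold t1; intros q q' y Aq Aq' H1 H2. pose proof (Hlen q). pose proof (Hlen q').
        pose proof (dpos q). pose proof (dpos q').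
        apply (anch D dl iso q q' y); auto; lra. }
      assert (DYY : forall q q' y, A q -> A q' -> f q <= y < f q + len q -> f q' <= y < f q' + len q' -> q = q').
      { intros q q' y Aq Aq' H1 H2. pose proof (Hlen q). pose proof (Hlen q').
        apply Hf2; auto. apply (anch D dl iso (f q) (f q') y); auto; lra. }
      assert (DXY : forall q q' y, A q -> A q' -> t1 q <= y < t1 q + len q -> f q' <= y < f q' + len q' -> False).
      { unfold t1; intros q q' y Aq Aq' H1 H2. pose proof (Hlen q). pose proof (Hlen q').
        pose proof (dpos q). pose proof (dpos (f q')).
        assert (E : q = f q') by (apply (anch D dl iso q (f q') y); auto; lra).
        rewrite <- E in *. lra. }
      assert (LF : forall x, exists e, 0 < e /\ forall q, A q ->
        (t1 q <= x < t1 q + len q \/ t1 q + len q <= x \/ x + e <= t1 q) /\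
        (f q <= x < f q + len q \/ f q + len q <= x \/ x + e <= f q)).
      { intro x.
        destruct (anchor_lf D dl dpos iso (fun u l => exists q, A q /\ ((u = t1 q /\ l = len q) \/ (u = f q /\ l = len q)))) with (x := x)
          as [e [He HL]].
        - intros u l [q [Aq [[-> ->]|[-> ->]]]].
          + exists q; split; auto; unfold slotted, t1;
            pose proof (Hlen q); pose proof (dpos q); right; split; auto; lra.
          + exists (f q); split; auto; unfold slotted;
            pose proof (Hlen q); pose proof (dpos (f q)); left; split; auto; lra.
        - exists e; split; auto. intros q Aq. split; apply HL; exists q; auto. }
      split; [apply swap_cont; auto|]. split; [apply swap_inv; auto|].
      intros a Aa. rewrite (swap_X A t1 f len DXX a); auto.
      + unfold t1; lra.
      + unfold t1; pose proof (Hlen a); lra. }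
    destruct S1 as [C1 [I1 V1]]. destruct S2 as [C2 [I2 V2]].
    exists (fun x => swapf A t1 f len (swapf A s1 t1 len x)). split.
    + exists (fun x => swapf A s1 t1 len (swapf A t1 f len x)).
      split; [intro x; rewrite I2; apply I1|].
      split; [intro x; rewrite I1; apply I2|].
      split; intros U HU; [apply (C1 (fun z => U (swapf A t1 f len z))); apply C2; auto | apply (C2 (fun z => U (swapf A s1 t1 len z))); apply C1; auto].
    + intros a Aa. rewrite V1 by auto. apply V2; auto.
Qed.
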